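(* Let $\beta,\delta,K,\mu>0$ and set $s^*=\mu/\delta$. Define $$a=2\beta,\qquad b=3\beta s^*-K\beta,\qquad c=2\beta s^{*2}+2K\delta-2K\beta s^*,\qquad d=4K\delta s^*,$$ and $$\Delta=b^2c^2-4ac^3-4b^3d-27a^2d^2+18abcd.$$ If $\Delta<0$, then the cubic equation $am^3+bm^2+cm+d=0$ has no positive root $m$.
   Context: This cubic determines the male component $m^*$ of a possible interior equilibrium, with female component $f^*>0$, of the system $$f'=\tfrac12 fm\beta L-\delta f,\qquad m'=\big(\tfrac12 fm+fs\big)\beta L-\delta m,\qquad s'=\mu-\delta s,\qquad L=1-\frac{f+m+s}{K}.$$ *)

(* Defs.v *)
From Stdlib Require Import Reals.
Open Scope R_scope.

Definition cubic_disc (a b c d : R) : R :=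
  b^2 * c^2 - 4 * a * c^3 - 4 * b^3 * d - 27 * a^2 * d^2 + 18 * a * b * c * d.

(* Main.v *)
Require Import Defs.
From Stdlib Require Import Reals Lra Psatz.
Open Scope R_scope.

Lemma disc_factor (a e g m : R) :
  cubic_disc a (e - a*m) (g - e*m) (-(m*g)) =
  (a*m^2 + e*m + g)^2 * (e^2 - 4*a*g).
Proof. unfold cubic_disc; ring. Qed.

Theorem mainTheorem18 (beta delta K mu : R) :
  0 < beta -> 0 < delta -> 0 < K -> 0 < mu ->
  let s := mu / delta in
  let a := 2 * beta in
  let b := 3 * beta * s - K * beta in
  let c := 2 * beta * s^2 + 2 * K * delta - 2 * K * beta * s in
  let d := 4 * K * delta * s in
  cubic_disc a b c d < 0 ->
  forall m : R, 0 < m -> a * m^3 + b * m^2 + c * m + d <> 0.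
Proof.
  intros hb hde hK hmu s a b c d hD m hm hp.
  assert (hs : 0 < s) by (unfold s; apply Rdiv_lt_0_compat; lra).
  assert (ha : 0 < a) by (unfold a; lra).
  assert (hd0 : 0 < d) by (unfold d; apply Rmult_lt_0_compat; [nra|lra]).
  clearbody d c b a s.
  set (e := b + a*m). set (g := c + e*m).
  assert (hd : d = -(m*g)) by (unfold g, e; nra).
  assert (hg : g < 0) by nra.
  assert (hbe : b = e - a*m) by (unfold e; ring).
  assert (hce : c = g - e*m) by (unfold g; ring).
  rewrite hbe, hce, hd, disc_factor in hD.
  assert (0 <= (a*m^2 + e*m + g)^2) by apply pow2_ge_0.
  assert (0 < e^2 - 4*a*g) by nra.
  nra.
Qed.
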